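(* Let $u$ be the $C^2$ solution of $$ r\left(1+4u'^2+3u'^4\right) - 2u'\left(1+u'^2\right) + 2r\,u''\left(3u'^2-1\right)=0$$ with $u(0)=u'(0)=0$, defined on its maximal interval $[0,r_M)$. Then $u'(r)>0$ for all $r\in(0,r_M)$ (so $u$ is strictly increasing), and $u$ is convex on $[0,r_M)$; equivalently, the curvature of the profile curve $r\mapsto (r,u(r))$ is positive on its maximal domain and its slope $u'$ increases from $0$ towards $1/\sqrt3$.
   Context: The maximal domain of this solution is a bounded interval $[0,r_M)$ with $\lim_{r\to r_M^-}u'(r)=1/\sqrt3$, and $u''(0)=1/4$. *)

(* Defs.v *)
From Stdlib Require Import Reals.
Open Scope R_scope.

(* One-sided-safe derivative on the half-open interval [a, b):
   f' is the derivative of f at every x in [a,b), the limit being taken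
   within [a,b) (so at x = a it is the right derivative). *)
Definition deriv_on (a b : R) (f f' : R -> R) : Prop :=
  forall x, a <= x < b ->
    forall eps, 0 < eps -> exists delta, 0 < delta /\
      forall y, a <= y < b -> Rabs (y - x) < delta ->
        Rabs (f y - f x - f' x * (y - x)) <= eps * Rabs (y - x).

Definition cont_on (a b : R) (g : R -> R) : Prop :=
  forall x, a <= x < b ->
    forall eps, 0 < eps -> exists delta, 0 < delta /\
      forall y, a <= y < b -> Rabs (y - x) < delta -> Rabs (g y - g x) < eps.

Definition is_sol (R0 : R) (u u1 u2 : R -> R) : Prop :=
  0 < R0 /\
  deriv_on 0 R0 u u1 /\ deriv_on 0 R0 u1 u2 /\ cont_on 0 R0 u2 /\
  u 0 = 0 /\ u1 0 = 0 /\
  forall r, 0 <= r < R0 ->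
    r * (1 + 4 * (u1 r)^2 + 3 * (u1 r)^4) - 2 * u1 r * (1 + (u1 r)^2)
    + 2 * r * u2 r * (3 * (u1 r)^2 - 1) = 0.

Definition is_maximal_sol (rM : R) (u u1 u2 : R -> R) : Prop :=
  is_sol rM u u1 u2 /\
  ~ (exists R' v v1 v2, rM < R' /\ is_sol R' v v1 v2 /\
       forall r, 0 <= r < rM -> v r = u r).

Definition convex_on (a b : R) (f : R -> R) : Prop :=
  forall x y t, a <= x < b -> a <= y < b -> 0 <= t <= 1 ->
    f (t * x + (1 - t) * y) <= t * f x + (1 - t) * f y.

(* Main.v *)
Require Import Defs.
From Stdlib Require Import Reals Lra Psatz Classical.
Open Scope R_scope.

Lemma L1' b f f' x : deriv_on 0 b f f' -> 0 < x < b ->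
  derivable_pt_lim (fun t => f (Rmax 0 t)) x (f' x).
Proof.
  intros Hd Hx eps Heps.
  destruct (Hd x ltac:(lra) (eps/2) ltac:(lra)) as [d [Hd0 Hdd]].
  assert (Hp : 0 < Rmin d (Rmin x (b - x))) by (repeat apply Rmin_glb_lt; lra).
  exists (mkposreal _ Hp). intros h Hh Hhd. simpl in Hhd.
  assert (Hm1 := Rmin_l d (Rmin x (b-x))). assert (Hm2 := Rmin_r d (Rmin x (b-x))).
  assert (Hm3 := Rmin_l x (b-x)). assert (Hm4 := Rmin_r x (b-x)).
  assert (Hb : - Rabs h <= h <= Rabs h) by (split; [assert (Hq := Rabs_Ropp h); assert (Hr := RRle_abs (-h)); lra | apply RRle_abs]).
  rewrite (Rmax_right 0 (x+h)) by lra. rewrite (Rmax_right 0 x) by lra.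
  assert (H := Hdd (x+h) ltac:(lra) ltac:(replace (x+h-x) with h by ring; lra)).
  replace (x+h-x) with h in H by ring.
  replace ((f (x+h) - f x)/h - f' x) with ((f (x + h) - f x - f' x * h) / h) by (field; auto).
  unfold Rdiv. rewrite Rabs_mult, Rabs_inv.
  assert (0 < Rabs h) by (apply Rabs_pos_lt; auto).
  apply (Rmult_lt_reg_r (Rabs h)); auto.
  rewrite Rmult_assoc, Rinv_l by lra. nra.
Qed.

Lemma abs_bnd h : - Rabs h <= h <= Rabs h.
Proof. split; [assert (Hq := Rabs_Ropp h); assert (Hr := RRle_abs (-h)); lra | apply RRle_abs]. Qed.

Lemma L4 b f f' c : deriv_on 0 b f f' -> 0 <= c < b ->
  continuity_pt (fun t => f (Rmax 0 t)) c.
Proof.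
  intros Hd Hc eps Heps.
  destruct (Hd c Hc 1 ltac:(lra)) as [d [Hd0 Hdd]].
  set (K := Rabs (f' c) + 1).
  assert (HK : 0 < K) by (unfold K; assert (H := Rabs_pos (f' c)); lra).
  assert (Hp : 0 < Rmin d (Rmin (b - c) (eps / K))).
  { repeat apply Rmin_glb_lt; try lra. apply Rdiv_lt_0_compat; lra. }
  exists (Rmin d (Rmin (b - c) (eps / K))). split; [exact Hp|].
  intros t [_ Ht]. simpl in *. unfold Rdist in *.
  assert (Hm1 := Rmin_l d (Rmin (b-c) (eps/K))). assert (Hm2 := Rmin_r d (Rmin (b-c) (eps/K))).
  assert (Hm3 := Rmin_l (b-c) (eps/K)). assert (Hm4 := Rmin_r (b-c) (eps/K)).
  rewrite (Rmax_right 0 c) by lra.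
  set (z := Rmax 0 t).
  assert (Hz : 0 <= z /\ Rabs (z - c) <= Rabs (t - c)).
  { unfold z. destruct (Rle_dec 0 t).
    - rewrite Rmax_right by lra. lra.
    - rewrite Rmax_left by lra. split; [lra|].
      rewrite Rabs_left1 by lra. rewrite Rabs_left by lra. lra. }
  destruct Hz as [Hz0 Hz1].
  assert (Hbt := abs_bnd (t - c)).
  assert (H := Hdd z ltac:(split; [lra| assert (Hzc:= abs_bnd (z - c)); lra]) ltac:(lra)).
  assert (Hr := Rabs_triang (f z - f c - f' c * (z - c)) (f' c * (z - c))).
  replace (f z - f c - f' c * (z - c) + f' c * (z - c)) with (f z - f c) in Hr by ring.
  rewrite Rabs_mult in Hr.
  assert (Hq : Rabs (f z - f c) <= K * Rabs (z - c)) by (unfold K; lra).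
  assert (Hq2 : K * Rabs (t - c) < K * (eps / K)) by (apply Rmult_lt_compat_l; lra).
  replace (K * (eps / K)) with eps in Hq2 by (field; lra).
  assert (K * Rabs (z - c) <= K * Rabs (t - c)) by (apply Rmult_le_compat_l; lra).
  lra.
Qed.

Lemma MVT_on b f f' x y : deriv_on 0 b f f' -> 0 <= x < y -> y < b ->
  exists c, x < c < y /\ f y - f x = f' c * (y - x).
Proof.
  intros Hd Hxy Hy.
  set (g := fun t => f (Rmax 0 t)).
  assert (pr1 : forall c, x < c < y -> derivable_pt g c).
  { intros c Hc. exists (f' c). apply (L1' b). exact Hd. lra. }
  assert (pr2 : forall c, x < c < y -> derivable_pt id c).
  { intros c _. apply derivable_pt_id. }
  destruct (MVT g id x y pr1 pr2 ltac:(lra)) as [c [P HP]].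
  - intros c Hc. apply (L4 b f f'); auto; lra.
  - intros c _. apply derivable_continuous_pt, derivable_pt_id.
  - exists c. split; [exact P|].
    assert (E2 : derive_pt id c (pr2 c P) = 1).
    { apply derive_pt_eq_0. apply derivable_pt_lim_id. }
    rewrite E2 in HP.
    assert (E : derive_pt g c (pr1 c P) = f' c).
    { apply derive_pt_eq_0. apply (L1' b). exact Hd. lra. }
    rewrite E in HP. unfold g, id in HP.
    rewrite (Rmax_right 0 x), (Rmax_right 0 y) in HP by lra. lra.
Qed.

Lemma L5 b f f' x y : deriv_on 0 b f f' -> (forall c, 0 < c < b -> 0 < f' c) ->
  0 <= x < y -> y < b -> f x < f y.
Proof.
  intros Hd Hp Hxy Hy. destruct (MVT_on b f f' x y Hd Hxy Hy) as [c [Hc E]].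
  assert (0 < f' c) by (apply Hp; lra). nra.
Qed.

Lemma pers_pos G m : continuity_pt G m -> 0 < G m ->
  exists d, 0 < d /\ forall s, Rabs (s - m) < d -> 0 < G s.
Proof.
  intros Hc Hg. destruct (Hc (G m) Hg) as [a [Ha H]].
  exists a. split; auto. intros s Hs.
  destruct (Req_dec s m) as [->|Hne]; auto.
  assert (Hq := H s (conj (conj I (not_eq_sym Hne)) Hs)). simpl in Hq. unfold Rdist in Hq.
  assert (Hb := abs_bnd (G s - G m)). lra.
Qed.

Lemma pers_neg G m : continuity_pt G m -> G m < 0 -> 0 < m ->
  exists s, 0 < s < m /\ G s < 0.
Proof.
  intros Hc Hg Hm.
  assert (Hc' : continuity_pt (fun t => - G t) m) by (apply continuity_pt_opp; auto).
  destruct (pers_pos _ m Hc' ltac:(lra)) as [d [Hd H]].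
  exists (m - Rmin d m / 2).
  assert (Hm1 := Rmin_l d m). assert (Hm2 := Rmin_r d m).
  assert (0 < Rmin d m) by (apply Rmin_glb_lt; lra).
  split; [lra|]. assert (Hq := H (m - Rmin d m / 2)).
  rewrite Rabs_left in Hq by lra. 
  assert (0 < - G (m - Rmin d m / 2)) by (apply Hq; lra). lra.
Qed.

Lemma deriv_neg_left G m l : derivable_pt_lim G m l -> 0 < l -> G m = 0 -> 0 < m ->
  exists s, 0 < s < m /\ G s < 0.
Proof.
  intros Hd Hl Hg Hm.
  destruct (Hd (l/2) ltac:(lra)) as [d Hdd].
  assert (Hd0 := cond_pos d).
  set (h := - (Rmin d m / 2)).
  assert (Hm1 := Rmin_l d m). assert (Hm2 := Rmin_r d m).
  assert (0 < Rmin d m) by (apply Rmin_glb_lt; lra).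
  assert (Hh : h <> 0) by (unfold h; lra).
  assert (Hq := Hdd h Hh ltac:(unfold h; rewrite Rabs_left by lra; lra)).
  rewrite Hg in Hq. exists (m + h). split; [unfold h; lra|].
  assert (Hb := abs_bnd ((G (m + h) - 0) / h - l)).
  assert (Hx : 0 < (G (m+h) - 0) / h) by lra.
  assert (Hneg : h < 0) by (unfold h; lra).
  replace (G (m+h)) with (((G (m + h) - 0) / h) * h) by (field; lra). nra.
Qed.

Lemma lim_const (k : R) D x0 : limit1_in (fun _ => k) D k x0.
Proof. unfold limit1_in, limit_in. simpl. intros eps He. exists 1. split; [lra|].
  intros. unfold Rdist. rewrite Rminus_diag, Rabs_R0. lra. Qed.

Lemma u2_0 R0 u u1 u2 : is_sol R0 u u1 u2 -> u2 0 = 1/4.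
Proof.
  intros [HR [Hdu [Hdu1 [Hc [Hu0 [Hu10 Hode]]]]]].
  set (D := fun x => 0 < x < R0). set (c := u2 0).
  set (Q := fun s => u1 s / s).
  assert (Hl2 : limit1_in u2 D c 0).
  { unfold limit1_in, limit_in. simpl. intros eps He.
    destruct (Hc 0 ltac:(lra) eps He) as [d [Hd H]]. exists d. split; [lra|].
    intros x [[Hx1 Hx2] Hx]. unfold Rdist in *. apply H; [lra|]. exact Hx. }
  assert (HlQ : limit1_in Q D c 0).
  { unfold limit1_in, limit_in. simpl. intros eps He.
    destruct (Hdu1 0 ltac:(lra) (eps/2) ltac:(lra)) as [d [Hd H]]. exists d. split; [lra|].
    intros x [[Hx1 Hx2] Hx]. unfold Rdist in *.
    assert (Hq := H x ltac:(lra) Hx). rewrite Hu10 in Hq. fold c in Hq.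
    replace (x - 0) with x in Hq by ring. rewrite (Rabs_right x) in Hq by lra.
    replace (u1 x - 0 - c * x) with (u1 x - c * x) in Hq by ring.
    unfold Q. replace (u1 x / x - c) with ((u1 x - c * x) / x) by (field; apply Rgt_not_eq; lra).
    unfold Rdiv. rewrite Rabs_mult, Rabs_inv, (Rabs_right x) by lra.
    apply (Rmult_lt_reg_r x); [lra|]. rewrite Rmult_assoc, Rinv_l by (apply Rgt_not_eq; lra). nra. }
  set (E := fun s => (1 + (Q s * s) * (Q s * s)) * (1 + 3 * ((Q s * s) * (Q s * s)))
     - 2 * Q s * (1 + (Q s * s) * (Q s * s)) + 2 * u2 s * (3 * ((Q s * s) * (Q s * s)) - 1)).
  assert (HL : limit1_in E D ((1 + (c*0)*(c*0)) * (1 + 3*((c*0)*(c*0)))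
     - 2 * c * (1 + (c*0)*(c*0)) + 2 * c * (3*((c*0)*(c*0)) - 1)) 0).
  { unfold E.
    repeat first [ apply limit_plus | apply limit_minus | apply limit_Ropp | apply limit_mul
                 | apply lim_const | apply lim_x | exact HQ | exact HlQ | exact Hl2 ]. }
  assert (HZ : limit1_in E D 0 0).
  { unfold limit1_in, limit_in. simpl. intros eps He. exists 1. split; [lra|].
    intros x [[Hx1 Hx2] _]. unfold Rdist.
    assert (Ex : E x = 0).
    { unfold E. replace (Q x * x) with (u1 x) by (unfold Q; field; apply Rgt_not_eq; lra).
      assert (Ho := Hode x ltac:(lra)).
      apply (Rmult_eq_reg_r x); [|lra]. rewrite Rmult_0_l. rewrite <- Ho.
      unfold Q. field. apply Rgt_not_eq; lra. }
    rewrite Ex, Rminus_0_r, Rabs_R0. lra. }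
  assert (Had : adhDa D 0).
  { intros alp Ha. exists (Rmin alp R0 / 2). unfold D, Rdist.
    assert (Hm1 := Rmin_l alp R0). assert (Hm2 := Rmin_r alp R0).
    assert (0 < Rmin alp R0) by (apply Rmin_glb_lt; lra).
    rewrite Rminus_0_r, Rabs_right by lra. lra. }
  assert (Hs := single_limit E D _ _ 0 Had HL HZ). lra.
Qed.

Lemma L2 b g x : cont_on 0 b g -> 0 < x < b -> continuity_pt g x.
Proof.
  intros Hc Hx eps He. destruct (Hc x ltac:(lra) eps He) as [d [Hd H]].
  assert (Hp : 0 < Rmin d (Rmin x (b - x))) by (repeat apply Rmin_glb_lt; lra).
  exists (Rmin d (Rmin x (b - x))). split; [exact Hp|].
  intros y [_ Hy]. simpl in *. unfold Rdist in *.
  assert (Hm1 := Rmin_l d (Rmin x (b-x))). assert (Hm2 := Rmin_r d (Rmin x (b-x))).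
  assert (Hm3 := Rmin_l x (b-x)). assert (Hm4 := Rmin_r x (b-x)).
  assert (Hb := abs_bnd (y - x)).
  apply H; lra.
Qed.

Lemma pos_all R0 u u1 u2 : is_sol R0 u u1 u2 -> forall s, 0 < s < R0 -> 0 < u2 s.
Proof.
  intros Hs. assert (Hc0 := u2_0 _ _ _ _ Hs).
  destruct Hs as [HR [Hdu [Hdu1 [Hc [Hu0 [Hu10 Hode]]]]]].
  set (pp := fun t => u1 (Rmax 0 t)).
  set (F := fun t => t * (1 + 3 * (pp t * pp t)) - 2 * pp t).
  assert (Hpp : forall t, 0 <= t -> pp t = u1 t).
  { intros t Ht. unfold pp. rewrite Rmax_right by lra. reflexivity. }
  assert (HdF : forall m, 0 < m < R0 -> derivable_pt_lim F m
     (1 * (1 + 3 * (pp m * pp m)) + m * (0 + (0 * (pp m * pp m) + 3 * (u2 m * pp m + pp m * u2 m)))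
      - (0 * pp m + 2 * u2 m))).
  { intros m Hm. assert (Hp := L1' R0 u1 u2 m Hdu1 Hm). fold pp in Hp. unfold F.
    exact (derivable_pt_lim_minus _ _ _ _ _
      (derivable_pt_lim_mult id _ m _ _ (derivable_pt_lim_id m)
        (derivable_pt_lim_plus (fct_cte 1) _ m _ _ (derivable_pt_lim_const 1 m)
          (derivable_pt_lim_mult (fct_cte 3) (mult_fct pp pp) m _ _ (derivable_pt_lim_const 3 m)
             (derivable_pt_lim_mult pp pp m _ _ Hp Hp))))
      (derivable_pt_lim_mult (fct_cte 2) pp m _ _ (derivable_pt_lim_const 2 m) Hp)). }
  assert (Hinit : exists r0, 0 < r0 < R0 /\ forall s, 0 < s <= r0 -> 0 < u2 s /\ 0 < F s).
  { destruct (Hc 0 ltac:(lra) (1/8) ltac:(lra)) as [d1 [Hd1 H1]].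
    destruct (Hdu1 0 ltac:(lra) (1/8) ltac:(lra)) as [d2 [Hd2 H2]].
    rewrite Hc0 in H1, H2. rewrite Hu10 in H2.
    assert (Hm1 := Rmin_l (Rmin d1 d2) R0). assert (Hm2 := Rmin_r (Rmin d1 d2) R0).
    assert (Hm3 := Rmin_l d1 d2). assert (Hm4 := Rmin_r d1 d2).
    assert (0 < Rmin (Rmin d1 d2) R0) by (repeat apply Rmin_glb_lt; lra).
    exists (Rmin (Rmin d1 d2) R0 / 2). split; [lra|]. intros t Ht.
    assert (A1 := H1 t ltac:(lra) ltac:(rewrite Rminus_0_r, Rabs_right; lra)).
    assert (A2 := H2 t ltac:(lra) ltac:(rewrite Rminus_0_r, Rabs_right; lra)).
    rewrite !Rminus_0_r in A2. rewrite (Rabs_right t) in A2 by lra.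
    assert (B1 := abs_bnd (u2 t - u2 0)). rewrite Hc0 in B1.
    assert (B2 := abs_bnd (u1 t - 1/4 * t)).
    split; [lra|]. unfold F. rewrite Hpp by lra.
    assert (0 <= t * (3 * (u1 t * u1 t))) by (apply Rmult_le_pos; [lra| nra]). nra. }
  destruct Hinit as [r0 [Hr0 Hr0']].
  set (EE := fun r => 0 < r < R0 /\ forall s, 0 < s <= r -> 0 < u2 s /\ 0 < F s).
  assert (Hb : bound EE) by (exists R0; intros r [Hr _]; lra).
  destruct (completeness EE Hb (ex_intro _ r0 (conj Hr0 Hr0'))) as [m [Hub Hlub]].
  assert (Hm0 : r0 <= m) by (apply Hub; split; auto).
  assert (HmR : m <= R0) by (apply Hlub; intros r [Hr _]; lra).
  assert (HA : forall s, 0 < s < m -> 0 < u2 s /\ 0 < F s).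
  { intros s Hs. destruct (classic (exists r, EE r /\ s <= r)) as [[r [[_ Hr] Hsr]]|Hn].
    - apply Hr; lra.
    - exfalso. assert (m <= s); [|lra]. apply Hlub. intros r Hr.
      destruct (Rle_dec s r); [exfalso; apply Hn; eauto | lra]. }
  intros s Hs. destruct (Rlt_le_dec s m) as [Hsm|Hsm]; [apply HA; lra|].
  exfalso. assert (HmR' : m < R0) by lra.
  assert (Hmi : 0 < m < R0) by lra.
  assert (Hcu2 := L2 R0 u2 m Hc Hmi).
  assert (HdFm := HdF m Hmi).
  assert (HcF := derivable_continuous_pt F m (exist _ _ HdFm)).
  rewrite (Hpp m) in HdFm by lra.
  set (p := u1 m) in *.
  assert (Hrel : (1 + p*p) * F m = 2*m*u2 m*(1 - 3*(p*p))).
  { unfold F. rewrite (Hpp m) by lra. fold p. assert (Ho := Hode m ltac:(lra)). fold p in Ho.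
    assert (X : (1+p*p)*(m*(1+3*(p*p)) - 2*p) - 2*m*u2 m*(1-3*(p*p)) =
       m * (1 + 4 * p ^ 2 + 3 * p ^ 4) - 2 * p * (1 + p ^ 2) + 2 * m * u2 m * (3 * p ^ 2 - 1)) by ring.
    lra. }
  assert (Hpp0 : 0 <= p * p) by nra.
  destruct (Rtotal_order (u2 m) 0) as [Hneg|[Hz|Hpos]].
  - destruct (pers_neg u2 m Hcu2 Hneg ltac:(lra)) as [t [Ht Ht']].
    destruct (HA t Ht). lra.
  - rewrite Hz in Hrel, HdFm.
    assert (HF0 : F m = 0) by nra.
    destruct (deriv_neg_left F m _ HdFm ltac:(nra) HF0 ltac:(lra)) as [t [Ht Ht']].
    destruct (HA t Ht). lra.
  - destruct (Rtotal_order (F m) 0) as [Fneg|[Fz|Fpos]].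
    + destruct (pers_neg F m HcF Fneg ltac:(lra)) as [t [Ht Ht']].
      destruct (HA t Ht). lra.
    + rewrite Fz in Hrel.
      assert (Hp2 : p * p = 1/3).
      { assert (0 < 2*m*u2 m) by nra.
        assert (Hq : (2*m*u2 m)*(1-3*(p*p)) = 0) by lra.
        apply Rmult_integral in Hq. destruct Hq; lra. }
      assert (Hmp : m = p).
      { unfold F in Fz. rewrite (Hpp m) in Fz by lra. fold p in Fz. rewrite Hp2 in Fz. lra. }
      assert (HL : 1 * (1 + 3 * (p * p)) + m * (0 + (0 * (p * p) + 3 * (u2 m * p + p * u2 m)))
                   - (0 * p + 2 * u2 m) = 2).
      { assert (Y : 1 * (1 + 3 * (p * p)) + m * (0 + (0 * (p * p) + 3 * (u2 m * p + p * u2 m)))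
                   - (0 * p + 2 * u2 m) = 1 + 3*(p*p) + 2*u2 m*(3*(m*p) - 1)) by ring.
        replace (m*p) with (p*p) in Y by (rewrite Hmp at 1; ring).
        rewrite Y, Hp2. field. }
      rewrite HL in HdFm.
      destruct (deriv_neg_left F m _ HdFm ltac:(lra) Fz ltac:(lra)) as [t [Ht Ht']].
      destruct (HA t Ht). lra.
    + destruct (pers_pos u2 m Hcu2 Hpos) as [d1 [Hd1 H1]].
      destruct (pers_pos F m HcF Fpos) as [d2 [Hd2 H2]].
      set (t := Rmin (m + Rmin d1 d2 / 2) ((m + R0)/2)).
      assert (Hm1 := Rmin_l (m + Rmin d1 d2 / 2) ((m + R0)/2)).
      assert (Hm2 := Rmin_r (m + Rmin d1 d2 / 2) ((m + R0)/2)).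
      assert (Hm3 := Rmin_l d1 d2). assert (Hm4 := Rmin_r d1 d2).
      assert (0 < Rmin d1 d2) by (apply Rmin_glb_lt; lra).
      assert (Htm : m < t) by (apply Rmin_glb_lt; lra).
      assert (HEt : EE t).
      { split; [fold t in Hm1, Hm2; lra|]. intros q Hq.
        destruct (Rlt_le_dec q m) as [Hqm|Hqm]; [apply HA; lra|].
        fold t in Hm1, Hm2.
        assert (Rabs (q - m) < d1 /\ Rabs (q - m) < d2)
          by (rewrite Rabs_right by lra; lra).
        split; [apply H1 | apply H2]; tauto. }
      assert (t <= m) by (apply Hub; exact HEt). lra.
Qed.

Lemma conv_aux b f f' x y t : deriv_on 0 b f f' ->
  (forall a c, 0 < a < c -> c < b -> f' a < f' c) ->
  0 <= x < y -> y < b -> 0 < t < 1 -> f (t*x+(1-t)*y) <= t*f x + (1-t)*f y.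
Proof.
  intros Hd Hm Hxy Hy Ht. set (z := t*x+(1-t)*y).
  assert (Hz : x < z < y) by (unfold z; split; nra).
  destruct (MVT_on b f f' x z Hd ltac:(lra) ltac:(lra)) as [c1 [Hc1 E1]].
  destruct (MVT_on b f f' z y Hd ltac:(lra) ltac:(lra)) as [c2 [Hc2 E2]].
  assert (Hlt : f' c1 < f' c2) by (apply Hm; lra).
  assert (P : 0 <= t*(1-t)*(y-x)*(f' c2 - f' c1)).
  { repeat apply Rmult_le_pos; lra. }
  assert (Q : t*f x + (1-t)*f y - f z = -t*(f z - f x) + (1-t)*(f y - f z)) by ring.
  rewrite E1, E2 in Q.
  assert (Q2 : t*f x + (1-t)*f y - f z = t*(1-t)*(y-x)*(f' c2 - f' c1)) by (rewrite Q; unfold z; ring).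
  lra.
Qed.

Theorem mainTheorem3 (rM : R) (u u1 u2 : R -> R) :
  is_maximal_sol rM u u1 u2 ->
  (forall r, 0 < r < rM -> 0 < u1 r) /\
  convex_on 0 rM u /\
  (forall r, 0 <= r < rM -> 0 < u2 r) /\
  (forall r s, 0 <= r < s -> s < rM -> u1 r < u1 s).
Proof.
  intros [Hs _].
  assert (Hp := pos_all _ _ _ _ Hs). assert (H0 := u2_0 _ _ _ _ Hs).
  destruct Hs as [HR [Hdu [Hdu1 [Hc [Hu0 [Hu10 Hode]]]]]].
  assert (Hinc : forall r s, 0 <= r < s -> s < rM -> u1 r < u1 s).
  { intros r s Hrs Hs. exact (L5 rM u1 u2 r s Hdu1 Hp Hrs Hs). }
  assert (Hu1p : forall r, 0 < r < rM -> 0 < u1 r).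
  { intros r Hr. rewrite <- Hu10. apply Hinc; lra. }
  split; [exact Hu1p|]. split.
  - intros x y t Hx Hy Ht.
    destruct (Req_dec t 0) as [->|Ht0].
    { replace (0*x+(1-0)*y) with y by ring. lra. }
    destruct (Req_dec t 1) as [->|Ht1].
    { replace (1*x+(1-1)*y) with x by ring. lra. }
    destruct (Rtotal_order x y) as [Hxy|[->|Hxy]].
    + apply (conv_aux rM u u1); auto; [|lra|lra|lra].
      intros a c Ha Hcb. apply Hinc; lra.
    + replace (t*y+(1-t)*y) with y by ring. lra.
    + replace (t*x+(1-t)*y) with ((1-t)*y+(1-(1-t))*x) by ring.
      replace (t*u x+(1-t)*u y) with ((1-t)*u y+(1-(1-t))*u x) by ring.
      apply (conv_aux rM u u1); auto; [|lra|lra|lra].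
      intros a c Ha Hcb. apply Hinc; lra.
  - split; [|exact Hinc].
    intros r Hr. destruct (Req_dec r 0) as [->|Hr0]; [lra|]. apply Hp; lra.
Qed.
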